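(* Let $R$ be a ring with identity. Then every element of $R$ is either a sum or a difference of a nilpotent and an idempotent if and only if either $R$ is nil clean, or $R \cong R_1 \times R_2$ where $R_1$ is a nil clean ring and $R_2$ is a ring with $R_2/\operatorname{Nil}^*(R_2) \cong \mathbb{Z}_3$.
   Context: Rings are associative with identity. A ring is nil clean if every element is the sum of an idempotent and a nilpotent. The upper nilradical $\operatorname{Nil}^*(S)$ of a ring $S$ is the largest nil ideal of $S$. $\mathbb{Z}_3$ is the ring of integers modulo $3$. A ring in which every element is either a sum or a difference of a nilpotent and an idempotent is called weakly nil-clean. *)

(* Defs.v *)
From HB Require Import structures.
From mathcomp Require Import all_boot all_algebra.
Set Implicit Arguments. Unset Strict Implicit. Unset Printing Implicit Defensive.
Import GRing.Theory.
Local Open Scope ring_scope.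

(* Rings: associative with identity, possibly non-commutative, possibly the
   zero ring (pzRingType). *)

Definition nilpotent_el {R : pzRingType} (x : R) : Prop := exists n : nat, x ^+ n = 0.
Definition idempotent_el {R : pzRingType} (e : R) : Prop := e * e = e.

Definition nil_clean (R : pzRingType) : Prop :=
  forall x : R, exists e q : R, idempotent_el e /\ nilpotent_el q /\ x = e + q.

Definition weakly_nil_clean (R : pzRingType) : Prop :=
  forall x : R, exists q e : R, nilpotent_el q /\ idempotent_el e /\
    (x = q + e \/ x = q - e).

Definition two_sided_ideal {R : pzRingType} (I : R -> Prop) : Prop :=
  I 0 /\ (forall x y, I x -> I y -> I (x - y)) /\
  (forall r x, I x -> I (r * x)) /\ (forall r x, I x -> I (x * r)).

Definition nil_ideal {R : pzRingType} (I : R -> Prop) : Prop :=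
  two_sided_ideal I /\ (forall x, I x -> nilpotent_el x).

(* upper nilradical Nil*(R): the largest nil ideal, i.e. the union (= sum) of
   all nil ideals of R *)
Definition upper_nilradical (R : pzRingType) (x : R) : Prop :=
  exists I : R -> Prop, nil_ideal I /\ I x.

Definition ring_iso (R S : pzRingType) : Prop :=
  exists f : {rmorphism R -> S}, bijective f.

(* S / Nil*(S) ≅ T, expressed via the first isomorphism theorem: a surjective
   ring morphism S -> T whose kernel is exactly Nil*(S) *)
Definition quot_upper_nilradical_iso (S T : pzRingType) : Prop :=
  exists phi : {rmorphism S -> T}, (forall t : T, exists s : S, phi s = t) /\
    (forall x : S, phi x = 0 <-> upper_nilradical x).

(* Main.v *)
Require Import Defs.
From HB Require Import structures.
From mathcomp Require Import all_boot all_algebra.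
From Stdlib Require Import ClassicalEpsilon.
Set Implicit Arguments. Unset Strict Implicit. Unset Printing Implicit Defensive.
Import GRing.Theory.
Local Open Scope ring_scope.

Section Basic.
Variable R : pzRingType.
Implicit Types x y z q e : R.

Lemma natC (k : nat) x : k%:R * x = x * k%:R.
Proof. by rewrite mulr_natl mulr_natr. Qed.

Lemma nil_exprM x y : GRing.comm x y -> nilpotent_el x -> nilpotent_el (x * y).
Proof. by move=> cxy [n Hn]; exists n; rewrite exprMn_comm // Hn mul0r. Qed.

Lemma nil_add_nat (k : nat) x y :
  nilpotent_el x -> nilpotent_el (k%:R : R) -> nilpotent_el (x + k%:R * y).
Proof.
move=> [n Hn] [j Hj].
have H : forall m, exists z, (x + k%:R * y) ^+ m = x ^+ m + k%:R * z.
  elim=> [|m [z IH]]; first by exists 0; rewrite mulr0 addr0.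
  exists (x ^+ m * y + z * x + z * (k%:R * y)).
  rewrite exprSr IH exprSr !mulrDl !mulrDr -!addrA; congr (_ + _).
  by rewrite !mulrA -(natC k (x ^+ m)).
have [z Hz] := H n.
exists (n * j)%N; rewrite exprM Hz Hn add0r exprMn_comm ?Hj ?mul0r //.
exact: commr_sym (commr_nat z k).
Qed.

Lemma nil_opp x : nilpotent_el x -> nilpotent_el (- x).
Proof. by move=> [n Hn]; exists n; rewrite exprNn Hn mulr0. Qed.

Lemma nilS x : nilpotent_el x -> exists n, x ^+ n.+1 = 0.
Proof. by move=> [n Hn]; exists n; rewrite exprSr Hn mul0r. Qed.

Lemma coprime_kill y (a b : nat) :
  y * a%:R = 0 -> (b%:R : R) = 0 -> coprime a b -> y = 0.
Proof.
move=> Ha Hb cab.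
case: b Hb cab => [|b] Hb cab.
  by move: cab Ha; rewrite /coprime gcdn0 => /eqP ->; rewrite mulr1.
have b0 : (0 < b.+1)%N by [].
have [u _ Hd] := @Bezoutl b.+1 a b0.
rewrite gcdnC (eqP cab) in Hd.
have [v Hv] := dvdnP Hd.
have : y * (1 + u * a)%:R = 0.
  by rewrite Hv natrM Hb !mulr0.
by rewrite natrD mulrDr mulr1 mulnC natrM mulrA Ha mul0r addr0.
Qed.

Lemma kill_right y a P (c m : nat) :
  a * P = c%:R -> y * a ^+ m = 0 -> y * (c%:R) ^+ m = 0.
Proof.
move=> HaP; elim: m y => [|m IH] y; first by [].
rewrite exprS mulrA => /IH.
move=> H; have : y * a * c%:R ^+ m * P = 0 by rewrite H mul0r.
rewrite -mulrA -(commrX m (commr_nat P c)) mulrA -(mulrA y) HaP.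
by rewrite exprS mulrA.
Qed.

End Basic.

Section More.
Variable R : pzRingType.
Implicit Types x y z q e : R.

Lemma idem_pow e n : e * e = e -> e ^+ n.+1 = e.
Proof. by move=> ee; elim: n => [|n IH]; rewrite ?expr1 // exprS IH ee. Qed.

Lemma six_nil : weakly_nil_clean R -> nilpotent_el (6%:R : R).
Proof.
move=> W; have [q [e [Hq [He Hx]]]] := W 2%:R.
have cq : forall k : nat, GRing.comm q (k%:R - q).
  by move=> k; apply: commrB; [apply: commr_nat|].
case: Hx => Hx.
- have Eq : q = 2%:R - e by rewrite Hx addrK.
  have K : q * (3%:R - q) = 2%:R.
    rewrite {2}Eq opprB addrCA -natrB // (_ : (3 - 2 = 1)%N) // [e + _]addrC mulrDr mulr1.
    by rewrite Eq mulrBl He mulr_natl mulr2n addrK subrK.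
  have N2 : nilpotent_el (2%:R : R) by rewrite -K; apply: nil_exprM.
  have -> : (6%:R : R) = 2%:R * 3%:R by rewrite -natrM.
  by apply: nil_exprM => //; apply: commr_nat.
- have Eq : q = 2%:R + e by rewrite Hx subrK.
  have K : q * (5%:R - q) = 6%:R.
    rewrite {2}Eq opprD addrA -natrB // (_ : (5 - 2 = 3)%N) // mulrBr mulr_natr.
    rewrite Eq mulrDl He mulr_natl mulrnDl -mulrnA mulrSr.
    by rewrite addrK.
  by rewrite -K; apply: nil_exprM.
Qed.

Lemma nc_of_wnc2 : weakly_nil_clean R -> nilpotent_el (2%:R : R) -> nil_clean R.
Proof.
move=> W N2 x; have [q [e [Hq [He Hx]]]] := W x.
case: Hx => ->; first by exists e, q; rewrite addrC.
exists e, (q + 2%:R * (- e)); split=> //; split; first exact: nil_add_nat.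
by rewrite mulrN mulr_natl mulr2n opprD addrCA (addrA e) subrr add0r.
Qed.

Lemma idem_aux e h f q : nilpotent_el (3%:R : R) ->
  e * e = e -> h * h = h -> f * f = f -> e + h = 1 ->
  nilpotent_el q -> e - h = q + f -> h = 0.
Proof.
move=> N3 ee hh ff eh Nq Hx.
set g := 1 - f.
have gg : g * g = g by rewrite /g mulrBl mul1r mulrBr mulr1 ff subrr subr0.
set t := g + h.
have Nt : nilpotent_el t.
  have -> : t = q + 3%:R * h.
    have Eq : q = e - h - f by rewrite Hx addrK.
    have Ee : e = 1 - h by rewrite -eh addrK.
    rewrite Eq Ee /t /g mulr_natl !mulrS mulr0n addr0.
    by rewrite (addrAC (1 - h - h)) !addrA !subrK addrAC.
  exact: nil_add_nat.
clearbody g; set d := g - h.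
have S : t * d + d * t = d *+ 2.
  rewrite /t /d mulrDl !mulrBr gg hh mulrBl !mulrDr gg hh opprD.
  rewrite addrACA (addrACA g) addNr addr0 (addrACA (h * g)) subrr add0r.
  by rewrite mulr2n addrACA.
have td : t * d = d * (2%:R - t).
  by rewrite [RHS]mulrBr (mulr_natr d 2) -S addrK.
have tk : forall k, t ^+ k * d = d * (2%:R - t) ^+ k.
  elim=> [|k IH]; first by rewrite mul1r mulr1.
  by rewrite exprSr -mulrA td mulrA IH -mulrA -exprSr.
have [n Hn] := Nt; have [j Hj] := N3.
have HP : (2%:R - t) * (\sum_(i < n) 2%:R ^+ (n.-1 - i) * t ^+ i) = (2 ^ n)%:R.
  by rewrite -subrXX_comm ?Hn ?subr0 ?natrX //; apply: commr_sym; apply: commr_nat.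
have d0 : d = 0.
  have := kill_right HP (_ : d * (2%:R - t) ^+ n = 0).
  rewrite -tk Hn mul0r => /(_ erefl); rewrite -natrX => H.
  apply: (coprime_kill H (_ : ((3 ^ j)%N%:R : R) = 0)); first by rewrite natrX.
  by apply/coprimeXl/coprimeXl/coprimeXr.
have gh : g = h by apply/eqP; rewrite -subr_eq0 -/d d0.
have [n' Hn'] := nilS Nt.
move: Hn'; rewrite /t gh -mulr2n exprMn_n idem_pow // -mulr_natr => H.
apply: (coprime_kill H (_ : ((3 ^ j)%N%:R : R) = 0)); first by rewrite natrX.
by apply/coprimeXl/coprimeXr.
Qed.

End More.

Section Gen.
Variable S : pzRingType.
Implicit Types x y a b q e : S.
Local Notation N := (@nilpotent_el S).

Lemma L1l a y : N a -> y * a = 1 -> (1 : S) = 0.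
Proof.
move=> [n Hn] H.
have K : forall k, y ^+ k * a ^+ k = 1.
  elim=> [|k IH]; first by rewrite mulr1.
  by rewrite exprSr exprS -mulrA (mulrA y) H mul1r.
by rewrite -(K n) Hn mulr0.
Qed.

Lemma L1r a y : N a -> a * y = 1 -> (1 : S) = 0.
Proof.
move=> [n Hn] H.
have K : forall k, a ^+ k * y ^+ k = 1.
  elim=> [|k IH]; first by rewrite mulr1.
  by rewrite exprSr exprS -mulrA (mulrA a) H mul1r.
by rewrite -(K n) Hn mul0r.
Qed.

Lemma L2 q : N q -> exists v, v * (1 - q) = 1 /\ (1 - q) * v = 1.
Proof.
move=> [n Hn]; exists (\sum_(i < n) q ^+ i).
have E : (1 - q) * (\sum_(i < n) q ^+ i) = 1.
  by rewrite -opprB mulNr -subrX1 Hn sub0r opprK.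
split=> //; rewrite -{2}E.
apply: commrB; first exact: commr1.
by apply: commr_sym; apply: commr_sum => i _; apply: commrX.
Qed.

Lemma L2' x : N (x - 1) \/ N (x + 1) -> exists v, v * x = 1 /\ x * v = 1.
Proof.
case=> [Nx|Nx].
- have [v [H1 H2]] := L2 (nil_opp Nx).
  by exists v; move: H1 H2; rewrite opprK addrC subrK.
- have [v [H1 H2]] := L2 Nx.
  exists (- v); move: H1 H2; rewrite opprD addrCA subrr addr0.
  by rewrite mulrN mulNr mulrN mulNr => -> ->.
Qed.

Variable (W : weakly_nil_clean S) (N3 : N 3%:R) (nz : (1 : S) != 0).

Lemma idem01 e : e * e = e -> e = 0 \/ e = 1.
Proof.
move=> ee.
have hh : (1 - e) * (1 - e) = 1 - e.
  by rewrite mulrBl mul1r mulrBr mulr1 ee subrr subr0.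
have [q [f [Nq [ff Hx]]]] := W (e - (1 - e)).
case: Hx => Hx.
- right; apply/eqP; rewrite eq_sym -subr_eq0; apply/eqP.
  apply: (idem_aux N3 ee hh ff _ Nq); first by rewrite addrC subrK.
  by rewrite Hx addrC.
- left; apply: (idem_aux N3 hh ee ff _ (nil_opp Nq)); first by rewrite subrK.
  by rewrite -opprB Hx opprB addrC.
Qed.

Lemma tri x : N x \/ N (x - 1) \/ N (x + 1).
Proof.
have [q [f [Nq [ff Hx]]]] := W x.
case: (idem01 ff) => Ef; rewrite Ef in Hx; case: Hx => ->.
- by left; rewrite addr0.
- by left; rewrite subr0.
- by right; left; rewrite addrK.
- by right; right; rewrite subrK.
Qed.

Lemma N_or_unit x : N x \/ exists v, v * x = 1 /\ x * v = 1.
Proof. by case: (tri x) => [|H]; [left|right; apply: L2']. Qed.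

Lemma one_nz : (1 : S) <> 0. Proof. by move/eqP; rewrite (negbTE nz). Qed.

Lemma nil_mull r a : N a -> N (r * a).
Proof.
move=> Na; case: (N_or_unit (r * a)) => // [[v [H _]]].
by case: one_nz; apply: (L1l Na (y := v * r)); rewrite -mulrA.
Qed.

Lemma nil_mulr r a : N a -> N (a * r).
Proof.
move=> Na; case: (N_or_unit (a * r)) => // [[v [_ H]]].
by case: one_nz; apply: (L1r Na (y := r * v)); rewrite mulrA.
Qed.

Lemma nil_add a b : N a -> N b -> N (a + b).
Proof.
move=> Na Nb; case: (N_or_unit (a + b)) => // [[w [_ H]]].
have [v [Hv _]] := L2 (nil_mulr w Nb).
case: one_nz; apply: (L1l (nil_mulr w Na) (y := v)).
by rewrite -Hv -H mulrDl addrK.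
Qed.

Lemma nil_sub a b : N a -> N b -> N (a - b).
Proof. by move=> Na Nb; apply: nil_add => //; apply: nil_opp. Qed.

Lemma nil_nat_false k : (0 < k < 3)%N -> N k%:R -> False.
Proof.
case: k => [|[|[|]]] // _ Nk; first by case: one_nz; apply: (L1l Nk (y := 1)); rewrite mul1r.
have N1 : N 1 by rewrite (_ : 1 = 3%:R - 2%:R); [apply: nil_sub | rewrite -natrB].
by case: one_nz; apply: (L1l N1 (y := 1)); rewrite mulr1.
Qed.

Lemma uniq3 x i j : (i < 3)%N -> (j < 3)%N -> N (x - i%:R) -> N (x - j%:R) -> i = j.
Proof.
move=> i3 j3 Ni Nj.
have H1 : N (j%:R - i%:R) by move: (nil_sub Ni Nj); rewrite opprB addrC addrA subrK.
have H2 : N (i%:R - j%:R) by move: (nil_sub Nj Ni); rewrite opprB addrC addrA subrK.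
case: (ltngtP i j) => // H; exfalso.
- move: H1; rewrite -natrB ?(ltnW H) // => H1.
  apply: (nil_nat_false _ H1); rewrite subn_gt0 H /=.
  exact: leq_ltn_trans (leq_subr _ _) j3.
- move: H2; rewrite -natrB ?(ltnW H) // => H2.
  apply: (nil_nat_false _ H2); rewrite subn_gt0 H /=.
  exact: leq_ltn_trans (leq_subr _ _) i3.
Qed.

Definition phi3 (x : S) : 'Z_3 :=
  if excluded_middle_informative (N x) then 0
  else if excluded_middle_informative (N (x - 1)) then 1 else 2.

Lemma phi_spec x : N (x - (val (phi3 x))%:R).
Proof.
rewrite /phi3; case: excluded_middle_informative => [H|H]; first by rewrite subr0.
case: excluded_middle_informative => // H'.
have Hp : N (x + 1) by case: (tri x) => [/H []|[/H' []|//]].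
rewrite (_ : x - _ = (x + 1) - 3%:R); first exact: nil_sub.
rewrite (_ : val (2 : 'Z_3) = 2%N) //.
have E3 : (3%:R : S) = 2%:R + 1 by rewrite mulrSr.
by rewrite E3 [in RHS]opprD addrACA subrr addr0.
Qed.

Lemma phi_eq x m : N (x - m%:R) -> phi3 x = m%:R.
Proof.
move=> Nm.
have Nm' : N (x - (m %% 3)%:R).
  rewrite {1}(divn_eq m 3) natrD opprD addrA in Nm.
  rewrite (_ : x - _ = (x - (m %/ 3 * 3)%:R - (m %% 3)%:R) + (m %/ 3)%:R * 3%:R).
    by apply: nil_add => //; apply: nil_mull.
  by rewrite -natrM addrAC subrK.
apply: val_inj; rewrite /= val_Zp_nat //.
by apply: (uniq3 _ _ (phi_spec x) Nm'); [exact: ltn_ord | rewrite ltn_pmod].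
Qed.

Lemma phi3_0 : phi3 0 = 0.
Proof. by rewrite (@phi_eq 0 0) // subr0; exists 1%N; rewrite expr1. Qed.

Lemma phi3_1 : phi3 1 = 1.
Proof. by rewrite (@phi_eq 1 1) // subrr; exists 1%N; rewrite expr1. Qed.

Lemma natZ3 (k : 'Z_3) : ((val k)%:R : 'Z_3) = k.
Proof. by apply: val_inj; rewrite /= val_Zp_nat // modn_small // ltn_ord. Qed.

Lemma phi3_D x y : phi3 (x + y) = phi3 x + phi3 y.
Proof.
rewrite -[phi3 x]natZ3 -[phi3 y]natZ3 -natrD; apply: phi_eq.
rewrite natrD opprD addrACA; apply: nil_add; exact: phi_spec.
Qed.

Lemma phi3_M x y : phi3 (x * y) = phi3 x * phi3 y.
Proof.
rewrite -[phi3 x]natZ3 -[phi3 y]natZ3 -natrM; apply: phi_eq.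
rewrite natrM (_ : x * y - _ = (x - (val (phi3 x))%:R) * y + (val (phi3 x))%:R * (y - (val (phi3 y))%:R)).
  by apply: nil_add; [apply: nil_mulr|apply: nil_mull]; apply: phi_spec.
by rewrite mulrBl mulrBr addrA subrK.
Qed.

End Gen.

Lemma quot_Z3 (S : pzRingType) : weakly_nil_clean S -> nilpotent_el (3%:R : S) ->
  (1 : S) != 0 -> quot_upper_nilradical_iso S 'Z_3.
Proof.
move=> W N3 nz.
pose m1 := GRing.isNmodMorphism.Build S 'Z_3 (@phi3 S)
  (phi3_0 W N3 nz, phi3_D W N3 nz).
pose m2 := GRing.isMonoidMorphism.Build S 'Z_3 (@phi3 S)
  (phi3_1 W N3 nz, phi3_M W N3 nz).
pose f : {rmorphism S -> 'Z_3} := HB.pack (@phi3 S) m1 m2.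
exists f; split.
- move=> t; exists (val t)%:R; rewrite /= (phi_eq W N3 nz (m := val t)) ?natZ3 //.
  by rewrite subrr; exists 1%N; rewrite expr1.
- move=> x; split => /=.
  + move=> H; exists (@nilpotent_el S); split; last first.
      by have := phi_spec W N3 nz x; rewrite H /= subr0.
    split; last by move=> ? /nilS [n Hn]; exists n.+1.
    split; first by exists 1%N; rewrite expr1.
    split; first by move=> a b Na Nb; apply: nil_sub.
    by split=> r a Na; [apply: nil_mull|apply: nil_mulr].
  + move=> [I [[_ HI] Ix]]; have Nx := HI _ Ix.
    by rewrite (phi_eq W N3 nz (m := 0)) ?subr0.
Qed.

Section Corner.
Variables (R : pzRingType) (e : R).
Variables (ee : e * e = e) (ec : forall x, e * x = x * e).

Definition corner (_ : e * e = e) (_ : forall x, e * x = x * e) := {x : R | x * e == x}.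
Local Notation C := (corner ee ec).
HB.instance Definition _ := Choice.copy C {x : R | x * e == x}.
HB.instance Definition _ := SubType.copy C {x : R | x * e == x}.

Lemma cproj_subproof (x : R) : (x * e) * e == x * e.
Proof. by rewrite -mulrA ee. Qed.
Definition cproj (x : R) : C := exist _ (x * e) (cproj_subproof x).
Lemma valK' (a : C) : val a * e = val a.
Proof. exact/eqP/(valP a). Qed.
Lemma val_cproj x : val (cproj x) = x * e. Proof. by []. Qed.

Definition cadd (a b : C) := cproj (val a + val b).
Definition copp (a : C) := cproj (- val a).
Definition czero : C := cproj 0.
Definition cmul (a b : C) := cproj (val a * val b).
Definition cone : C := cproj 1.

Lemma val_cadd a b : val (cadd a b) = val a + val b.
Proof. by rewrite val_cproj mulrDl !valK'. Qed.
Lemma val_copp a : val (copp a) = - val a.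
Proof. by rewrite val_cproj mulNr valK'. Qed.
Lemma val_czero : val czero = 0. Proof. by rewrite val_cproj mul0r. Qed.
Lemma val_cmul a b : val (cmul a b) = val a * val b.
Proof. by rewrite val_cproj -mulrA valK'. Qed.
Lemma val_cone : val cone = e. Proof. by rewrite val_cproj mul1r. Qed.

Let vE := (val_cadd, val_copp, val_czero, val_cmul, val_cone).

Lemma caddA : associative cadd.
Proof. by move=> a b c; apply: val_inj; rewrite !vE addrA. Qed.
Lemma caddC : commutative cadd.
Proof. by move=> a b; apply: val_inj; rewrite !vE addrC. Qed.
Lemma cadd0 : left_id czero cadd.
Proof. by move=> a; apply: val_inj; rewrite !vE add0r. Qed.
Lemma caddN : left_inverse czero copp cadd.
Proof. by move=> a; apply: val_inj; rewrite !vE addNr. Qed.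
Lemma cmulA : associative cmul.
Proof. by move=> a b c; apply: val_inj; rewrite !vE mulrA. Qed.
Lemma cmul1 : left_id cone cmul.
Proof. by move=> a; apply: val_inj; rewrite !vE ec valK'. Qed.
Lemma cmulr1 : right_id cone cmul.
Proof. by move=> a; apply: val_inj; rewrite !vE valK'. Qed.
Lemma cmulDl : left_distributive cmul cadd.
Proof. by move=> a b c; apply: val_inj; rewrite !vE mulrDl. Qed.
Lemma cmulDr : right_distributive cmul cadd.
Proof. by move=> a b c; apply: val_inj; rewrite !vE mulrDr. Qed.

HB.instance Definition _ := GRing.isZmodule.Build C caddA caddC cadd0 caddN.
HB.instance Definition _ := GRing.Zmodule_isPzRing.Build C cmulA cmul1 cmulr1 cmulDl cmulDr.

Lemma cvalD (a b : C) : val (a + b) = val a + val b. Proof. exact: val_cadd. Qed.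
Lemma cvalM (a b : C) : val (a * b) = val a * val b. Proof. exact: val_cmul. Qed.
Lemma cval1 : val (1 : C) = e. Proof. exact: val_cone. Qed.
Lemma cval0 : val (0 : C) = 0. Proof. exact: val_czero. Qed.
End Corner.


Section CornerMore.
Variables (R : pzRingType) (e : R).
Variables (ee : e * e = e) (ec : forall x, e * x = x * e).
Local Notation C := (corner ee ec).

Lemma cvalK (a : C) : val a * e = val a.
Proof. exact: valK'. Qed.

Lemma cvalN (a : C) : val (- a) = - val a. Proof. exact: val_copp. Qed.

Lemma cvalX (a : C) n : val (a ^+ n.+1) = val a ^+ n.+1.
Proof.
elim: n => [|n IH]; first by rewrite !expr1.
by rewrite exprS cvalM IH -exprS.
Qed.

Lemma cval_proj x : val (cproj ee ec x) = x * e. Proof. by []. Qed.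

Lemma corner_nat_nil (k n : nat) : (k ^ n)%:R * e = 0 -> nilpotent_el (k%:R : C).
Proof.
move=> H; exists n.+1; apply: val_inj; rewrite cvalX cval0.
have -> : val (k%:R : C) = k%:R * e.
  elim: k {H} => [|k IH]; first by rewrite cval0 mul0r.
  by rewrite mulrS cvalD IH cval1 mulrS mulrDl mul1r.
rewrite exprMn_comm; last exact: commr_sym (commr_nat e k).
by rewrite (idem_pow n ee) -natrX expnS natrM -mulrA H mulr0.
Qed.

Lemma corner_wnc : weakly_nil_clean R -> weakly_nil_clean C.
Proof.
move=> W x; have [q [f [[n Hq] [ff Hx]]]] := W (val x).
have qe : GRing.comm q e by rewrite /GRing.comm ec.
exists (cproj ee ec q), (cproj ee ec f); split; last split.
- exists n.+1; apply: val_inj; rewrite cvalX cval0 cval_proj exprMn_comm //.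
  by rewrite exprSr Hq mul0r mul0r.
- apply: val_inj; rewrite cvalM !cval_proj -mulrA (ec (f * e)) -mulrA ee mulrA ff //.
- case: Hx => Hx; [left|right]; apply: val_inj;
    rewrite ?cvalD ?cvalN !cval_proj -cvalK Hx ?mulrBl ?mulrDl //.
Qed.

End CornerMore.

Section Iso.
Variables (R : pzRingType) (e e' : R).
Variables (ee : e * e = e) (ec : forall x, e * x = x * e).
Variables (ee' : e' * e' = e') (ec' : forall x, e' * x = x * e').
Hypothesis h1 : e + e' = 1.
Local Notation C1 := (corner ee ec).
Local Notation C2 := (corner ee' ec').

Definition split_map (x : R) : (C1 * C2)%type := (cproj ee ec x, cproj ee' ec' x).

Lemma ee'0 : e * e' = 0.
Proof. by rewrite (_ : e' = 1 - e) ?mulrBr ?mulr1 ?ee ?subrr // -h1 addrAC subrr add0r. Qed.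
Lemma e'e0 : e' * e = 0.
Proof. by rewrite -ec ee'0. Qed.

Lemma cprojM (f g : R) (ff : f * f = f) (fc : forall x, f * x = x * f) x y :
  cproj ff fc (x * y) = cproj ff fc x * cproj ff fc y.
Proof.
apply: val_inj; rewrite cvalM !cval_proj.
by symmetry; rewrite -mulrA (mulrA f) (fc y) -mulrA ff mulrA.
Qed.

Lemma cprojD (f : R) (ff : f * f = f) (fc : forall x, f * x = x * f) x y :
  cproj ff fc (x + y) = cproj ff fc x + cproj ff fc y.
Proof. by apply: val_inj; rewrite cvalD !cval_proj mulrDl. Qed.

Lemma cproj0 (f : R) (ff : f * f = f) (fc : forall x, f * x = x * f) :
  cproj ff fc 0 = 0.
Proof. by apply: val_inj; rewrite cval_proj mul0r. Qed.

Lemma split_iso : ring_iso R (C1 * C2)%type.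
Proof.
have s0 : split_map 0 = 0 by rewrite /split_map; congr pair; apply: cproj0.
have sD : {morph split_map : x y / x + y}.
  by move=> x y; rewrite /split_map; congr pair; apply: cprojD.
have s1 : split_map 1 = 1 by [].
have sM : {morph split_map : x y / x * y}.
  by move=> x y; rewrite /split_map; congr pair; apply: cprojM.
pose m1 := GRing.isNmodMorphism.Build R (C1 * C2)%type split_map (s0, sD).
pose m2 := GRing.isMonoidMorphism.Build R (C1 * C2)%type split_map (s1, sM).
pose F : {rmorphism R -> (C1 * C2)%type} := HB.pack split_map m1 m2.
exists F; exists (fun p : (C1 * C2)%type => val p.1 + val p.2).
- move=> x; change (val (split_map x).1 + val (split_map x).2 = x).
  by rewrite /split_map /= -mulrDr h1 mulr1.
- case=> a b; change (split_map (val a + val b) = (a, b)).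
  rewrite /split_map; congr pair; apply: val_inj; rewrite cval_proj mulrDl.
  + have -> : val b * e = 0 by rewrite -(cvalK b) -mulrA e'e0 mulr0.
    by rewrite addr0 cvalK.
  + have -> : val a * e' = 0 by rewrite -(cvalK a) -mulrA ee'0 mulr0.
    by rewrite add0r cvalK.
Qed.
End Iso.

Lemma pairX (A B : pzRingType) (p : (A * B)%type) n : p ^+ n = (p.1 ^+ n, p.2 ^+ n).
Proof. by elim: n => [|n IH]; rewrite ?expr0 // !exprS IH. Qed.

Lemma pair_nil (A B : pzRingType) (a : A) (b : B) :
  nilpotent_el a -> nilpotent_el b -> nilpotent_el ((a, b) : (A * B)%type).
Proof.
move=> [n Hn] [m Hm]; exists (n + m)%N; rewrite pairX /= !exprD Hn Hm mul0r mulr0.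
by [].
Qed.

Lemma Z3_cases (k : 'Z_3) : k = 0 \/ k = 1 \/ k = 2.
Proof. case: k => [[|[|[|]]]] //= ?; [left|right;left|right;right]; exact: val_inj. Qed.

Lemma wnc_iso (R A B : pzRingType) : ring_iso R (A * B)%type -> nil_clean A ->
  quot_upper_nilradical_iso B 'Z_3 -> weakly_nil_clean R.
Proof.
move=> [f [g fK gK]] NA [phi [_ ker]] x.
have nilB : forall y, phi y = 0 -> nilpotent_el y.
  by move=> y /ker [I [[_ HI] Iy]]; apply: HI.
suff [q [e [Nq [Ee H]]]] : exists q e : (A * B)%type,
    nilpotent_el q /\ idempotent_el e /\ (f x = q + e \/ f x = q - e).
  exists (g q), (g e); split; last split.
  - have [n Hn] := Nq; exists n; apply: (can_inj fK).
    by rewrite rmorphXn gK Hn rmorph0.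
  - by apply: (can_inj fK); rewrite rmorphM gK Ee.
  - by case: H => H; [left|right]; apply: (can_inj fK);
      rewrite ?rmorphD ?rmorphN !gK H.
case: (f x) => a b.
case: (Z3_cases (phi b)) => [H0|[H1|H2]].
- have [e1 [q1 [E1 [N1 Ha]]]] := NA a.
  exists (q1, b), (e1, 0); split; first by apply: pair_nil => //; exact: nilB.
  split; first by rewrite /idempotent_el; congr pair; rewrite ?mul0r.
  by left; rewrite Ha; congr pair; rewrite ?addr0 // addrC.
- have [e1 [q1 [E1 [N1 Ha]]]] := NA a.
  exists (q1, b - 1), (e1, 1); split.
    by apply: pair_nil => //; apply: nilB; rewrite rmorphB rmorph1 H1 subrr.
  split; first by rewrite /idempotent_el; congr pair; rewrite ?mulr1.
  by left; rewrite Ha; congr pair; rewrite ?subrK // addrC.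
- have [e1 [q1 [E1 [N1 Ha]]]] := NA (- a).
  exists (- q1, b + 1), (e1, 1); split.
    apply: pair_nil; first exact: nil_opp.
    by apply: nilB; rewrite rmorphD rmorph1 H2; apply/eqP.
  split; first by rewrite /idempotent_el; congr pair; rewrite ?mulr1.
  right; congr pair; last by rewrite addrK.
  by rewrite -[a]opprK Ha opprD addrC.
Qed.

Unset Implicit Arguments.

Theorem theorem3 (R : pzRingType) :
  weakly_nil_clean R <->
  (nil_clean R \/
   exists (R1 R2 : pzRingType),
     ring_iso R (R1 * R2)%type /\ nil_clean R1 /\
     quot_upper_nilradical_iso R2 'Z_3).
Proof.
split; last first.
  case=> [NC x|[R1 [R2 [Hi [N1 Q2]]]]]; last exact: wnc_iso Hi N1 Q2.
  by have [e [q [Ee [Nq ->]]]] := NC x; exists q, e; split; [|split; [|left; rewrite addrC]].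
move=> W.
have [n Hn] := six_nil W.
have H6 : ((6 ^ n)%N%:R : R) = 0 by rewrite natrX.
have cop : coprime (2 ^ n) (3 ^ n) by apply/coprimeXl/coprimeXr.
have [a _ Hd] := @Bezoutl (2 ^ n) (3 ^ n) (expn_gt0 2 n).
rewrite (eqP cop) in Hd; have [u Hu] := dvdnP Hd.
pose eps : R := (u * 2 ^ n)%N%:R.
have Eeps : eps = 1 + (a * 3 ^ n)%N%:R by rewrite /eps -Hu natrD.
have ee : eps * eps = eps.
  rewrite {2}Eeps mulrDr mulr1 /eps -natrM.
  rewrite (_ : (u * 2 ^ n * (a * 3 ^ n) = (u * a) * 6 ^ n)%N); last first.
    by rewrite mulnACA -expnMn.
  by rewrite (natrM _ (u * a)) H6 mulr0 addr0.
have ec : forall x, eps * x = x * eps by move=> x; exact: commr_sym (commr_nat x _).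
pose e1 := 1 - eps.
have ee1 : e1 * e1 = e1 by rewrite /e1 mulrBl mul1r mulrBr mulr1 ee subrr subr0.
have ec1 : forall x, e1 * x = x * e1.
  by move=> x; rewrite /e1 mulrBl mulrBr mul1r mulr1 ec.
have He1 : e1 = - (a * 3 ^ n)%N%:R by rewrite /e1 Eeps opprD addrA subrr add0r.
have H2 : (2 ^ n)%N%:R * e1 = 0.
  rewrite He1 mulrN -natrM (_ : (2 ^ n * (a * 3 ^ n) = a * 6 ^ n)%N).
    by rewrite natrM H6 mulr0 oppr0.
  by rewrite mulnCA -expnMn.
have H3 : (3 ^ n)%N%:R * eps = 0.
  rewrite /eps -natrM (_ : (3 ^ n * (u * 2 ^ n) = u * 6 ^ n)%N).
    by rewrite natrM H6 mulr0.
  by rewrite mulnCA -expnMn mulnC.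
case: (eqVneq eps 0) => [E0|Enz].
  left; apply: nc_of_wnc2 => //; exists n.
  by move: H2; rewrite /e1 E0 subr0 mulr1 natrX.
right; exists (corner ee1 ec1), (corner ee ec); split; last split.
- by apply: split_iso; rewrite /e1 subrK.
- apply: nc_of_wnc2; first exact: corner_wnc.
  exact: corner_nat_nil H2.
- apply: quot_Z3; first exact: corner_wnc.
    exact: corner_nat_nil H3.
  apply/eqP => H; move: (congr1 val H); rewrite cval1 cval0 => E.
  by rewrite E eqxx in Enz.
Qed.
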